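(* Let $(R,B)\in\mathcal{D}_d$ with $R=\mathrm{diag}(m_1,\dots,m_d)$ and $m_1,\dots,m_d\ge d+1$. Let $(p_b)_{b\in B}$ be positive weights and $\lambda=\sum_{b\in B}p_b\delta_b$. Let $\mu$ be a finite nonzero Borel measure on $\mathbb{R}^d$ with $\operatorname{spt}(\mu)\subseteq[0,1]^d$, and set $\nu=(\lambda*\mu)\circ R$, i.e., $\nu(F)=(\lambda*\mu)(RF)$ for Borel $F$. Then there is a Borel set $E\subseteq\mathbb{R}^d$ with $\nu(E)>0$ and $\nu(E+n)=0$ for all $n\in\mathbb{Z}^d\setminus\{\mathbf{0}\}$.
   Context: $\mathcal{D}_d$ is the set of pairs $(R,B)$ with $R=\mathrm{diag}(m_1,\dots,m_d)$, $m_1,\dots,m_d\ge2$ integers, and $B$ a nonempty subset of $\{0,\dots,m_1-1\}\times\cdots\times\{0,\dots,m_d-1\}$. $\operatorname{spt}(\mu)$ denotes the support of $\mu$ (smallest closed set of full measure). *)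

(* Defs.v *)
(* R^d is modelled as d.-tuple R, which
   MathComp-Analysis equips with the product sigma-algebra of the Borel
   sigma-algebras of R (= the Borel sigma-algebra of R^d). *)
From HB Require Import structures.
From mathcomp Require Import all_boot all_order all_algebra.
From mathcomp Require Import all_classical all_reals all_analysis.
Set Implicit Arguments. Unset Strict Implicit. Unset Printing Implicit Defensive.
Import Order.TTheory GRing.Theory Num.Theory.
Local Open Scope classical_set_scope.
Local Open Scope ring_scope.

Section Defs.
Context {R : realType} {d : nat}.

Definition vadd (x y : d.-tuple R) : d.-tuple R := [tuple tnth x i + tnth y i | i < d].
Definition vsub (x y : d.-tuple R) : d.-tuple R := [tuple tnth x i - tnth y i | i < d].

Definition intvec (n : d.-tuple int) : d.-tuple R := [tuple (tnth n i)%:~R | i < d].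
Definition natvec (b : d.-tuple nat) : d.-tuple R := [tuple (tnth b i)%:R | i < d].

Definition diagmul (m : d.-tuple nat) (x : d.-tuple R) : d.-tuple R :=
  [tuple (tnth m i)%:R * tnth x i | i < d].

Definition translate (A : set (d.-tuple R)) (v : d.-tuple R) : set (d.-tuple R) :=
  [set vadd x v | x in A].

(* support of a measure: points all of whose (cubical) open neighbourhoods
   have positive measure; this is the smallest closed set of full measure *)
Definition spt (mu : set (d.-tuple R) -> \bar R) : set (d.-tuple R) :=
  [set x : d.-tuple R | forall e : R, (0 < e)%R ->
     (0 < mu [set y : d.-tuple R | forall i, (`|tnth y i - tnth x i| < e)%R])%E].

Definition unit_cube : set (d.-tuple R) := [set x : d.-tuple R | forall i, (0 <= tnth x i <= 1)%R].

(* (lambda * mu)(A) with lambda = sum_{b in B} p_b delta_b :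
   (lambda * mu)(A) = sum_b p_b mu(A - b) *)
Definition conv_discrete (B : seq (d.-tuple nat)) (p : d.-tuple nat -> R)
  (mu : set (d.-tuple R) -> \bar R) (A : set (d.-tuple R)) : \bar R :=
  (\sum_(b <- B) (p b)%:E * mu [set vsub x (natvec b) | x in A])%E.

Definition nu_of (m : d.-tuple nat) (B : seq (d.-tuple nat)) (p : d.-tuple nat -> R)
  (mu : set (d.-tuple R) -> \bar R) (F : set (d.-tuple R)) : \bar R :=
  conv_discrete B p mu (diagmul m @` F).

End Defs.

(* Main.v *)
Require Import Defs.
From HB Require Import structures.
From mathcomp Require Import all_boot all_order all_algebra.
From mathcomp Require Import all_classical all_reals all_analysis.
From mathcomp Require Import zify ring lra.
Import Order.TTheory GRing.Theory Num.Theory.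
Local Open Scope classical_set_scope.
Local Open Scope ring_scope.

Lemma arith (m b bs : nat) (s ss : int) (n : int) :
  (2 <= m)%N -> (b < m)%N -> (bs < m)%N -> 0 <= s <= 2 -> 0 <= ss <= 2 ->
  s = ss + 2 * (bs%:Z - b%:Z + m%:Z * n) ->
  ((2 * b%:Z + s) - m%:Z)^+2 = ((2 * bs%:Z + ss) - m%:Z)^+2 /\
  ((2 * bs%:Z + s) - m%:Z)^+2 + ((2 * b%:Z + ss) - m%:Z)^+2 + (if n == 0 then 0 else 8 * m%:Z) <= 2 * ((2 * bs%:Z + ss) - m%:Z)^+2 + 8.
Proof.
move=> hm hb hbs hs hss e.
have hn : n = 0 \/ n = 1 \/ n = -1.
  nia.
move: e; case: hn => [->|[->|->]] /= e.
- have -> : 2 * b%:Z + s = 2 * bs%:Z + ss by lia.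
  split => //.
  set t := 2 * bs%:Z + ss - m%:Z.
  have -> : 2 * bs%:Z + s - m%:Z = t + (s - ss) by rewrite /t; lia.
  have -> : 2 * b%:Z + ss - m%:Z = t - (s - ss) by rewrite /t; lia.
  have h : (s - ss) ^+ 2 <= 4 by rewrite expr2; nia.
  rewrite addr0. nia.
- have h1 : bs = 0%N by lia.
  have h2 : (b%:Z = m%:Z - 1) by lia.
  have h3 : s = 2 by lia.
  have h4 : ss = 0 by lia.
  rewrite h1 h2 h3 h4 !expr2; split; lia.
- have h1 : b = 0%N by lia.
  have h2 : (bs%:Z = m%:Z - 1) by lia.
  have h3 : s = 0 by lia.
  have h4 : ss = 2 by lia.
  rewrite h1 h2 h3 h4 !expr2; split; lia.
Qed.

Section S.
Context {R : realType} {d : nat}.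

Definition cubeQ (c : d.-tuple R) (r : R) : set (d.-tuple R) :=
  [set y | forall i, `|tnth y i - tnth c i| < r].

Lemma meas_coord (P : 'I_d -> set R) : (forall i, measurable (P i)) ->
  measurable [set y : d.-tuple R | forall i, P i (tnth y i)].
Proof.
move=> mP.
have -> : [set y : d.-tuple R | forall i, P i (tnth y i)] =
   \bigcap_(i in [set: 'I_d]) ([set: d.-tuple R] `&` (fun y => tnth y i) @^-1` P i).
  by apply/seteqP; split => [y hy i _|y hy i]; [split|have [] := hy i I].
apply: fin_bigcap_measurable => // i _.
exact: measurable_tnth.
Qed.

Lemma cubeQ_meas c r : measurable (cubeQ c r).
Proof.
apply: (meas_coord (fun i => [set t : R | `|t - tnth c i| < r])) => i.
have -> : [set t : R | `|t - tnth c i| < r] = `](tnth c i - r), (tnth c i + r)[%classic.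
  by apply/seteqP; split => t; rewrite /= in_itv /= ltr_distl.
exact: measurable_itv.
Qed.

Lemma dist_tri (x y c r e : R) : `|x - c| < r -> `|y - c| < r -> 2 * r < e ->
  `|y - x| < e.
Proof.
move=> h1 h2 h3.
have -> : y - x = (y - c) + (c - x) by ring.
rewrite (le_lt_trans (ler_normD _ _)) //.
rewrite distrC in h1; have := ltrD h1 h2; lra.
Qed.

Lemma outside_negl (mu : {measure set (d.-tuple R) -> \bar R}) :
  spt mu `<=` unit_cube -> mu.-negligible (~` unit_cube).
Proof.
move=> hspt.
pose Q (k : nat) (z : d.-tuple int) : set (d.-tuple R) :=
  cubeQ [tuple (tnth z i)%:~R / k.+1%:R | i < d] (k.+1%:R^-1).
pose F (n : nat) : set (d.-tuple R) :=
  match (unpickle n : option (nat * d.-tuple int)) with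
  | Some kz => if pselect (mu (Q kz.1 kz.2) = 0) is left _ then Q kz.1 kz.2 else set0
  | None => set0 end.
have FN k : mu.-negligible (F k).
  rewrite /F; case: (unpickle k) => [[k' z]|]; last exact: negligible_set0.
  case: pselect => [h|_]; last exact: negligible_set0.
  by exists (Q k' z); split => //; exact: cubeQ_meas.
apply: (negligibleS _ (negligible_bigcup FN)).
move=> x /= hx.
have : ~ spt mu x by move=> /hspt.
move=> /existsNP [e /not_implyP [e0 he]].
have hQe : mu (cubeQ x e) = 0.
  by apply/eqP; rewrite -measure_le0; move/negP: he; rewrite -leNgt.
set k := Num.truncn (2 / e).
have hk : 2 / e < k.+1%:R by exact: truncnS_gt.
pose z := [tuple Num.floor (tnth x i * k.+1%:R) | i < d].
have k0 : (0 : R) < k.+1%:R by rewrite ltr0n.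
have hxQ : Q k z x.
  move=> i; rewrite !tnth_mktuple.
  have := floor_itv (tnth x i * k.+1%:R) => /andP [h1 h2].
  rewrite intrD in h2.
  set a : R := k.+1%:R in h1 h2 *.
  set f : R := (Num.floor (tnth x i * a))%:~R in h1 h2 *.
  have a0 : a != 0 by rewrite gt_eqF.
  rewrite ltr_distl; apply/andP; split.
    have -> : f / a - a^-1 = (f - 1) / a by field.
    by rewrite ltr_pdivrMr //; lra.
  have -> : f / a + a^-1 = (f + 1) / a by field.
  by rewrite ltr_pdivlMr //; lra.
have hsub : Q k z `<=` cubeQ x e.
  move=> y hy i; have := hy i; have := hxQ i.
  rewrite /= => h1 h2.
  have h3 : 2 * k.+1%:R^-1 < e.
    by rewrite ltr_pdivrMr // mulrC -ltr_pdivrMr.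
  exact: (dist_tri _ _ _ _ _ h1 h2 h3).
have hQ0 : mu (Q k z) = 0.
  apply/eqP; rewrite -measure_le0 -hQe; apply: le_measure; rewrite ?inE //;
  exact: cubeQ_meas.
exists (pickle (k, z)) => //.
by rewrite /F pickleK /=; case: pselect.
Qed.

Definition fc (k : 'I_3) : set R :=
  if val k == 0%N then [set 0] else if val k == 1%N then [set 1] else [set t | 0 < t < 1].

Definition Fs (s : {ffun 'I_d -> 'I_3}) (v : 'I_d -> int) : set (d.-tuple R) :=
  [set z | forall i, fc (s i) (tnth z i - (v i)%:~R)].

Definition zv : 'I_d -> int := fun=> 0.

Lemma fc_meas k (c : R) : measurable [set t | fc k (t - c)].
Proof.
rewrite /fc; case: ifP => _.
  have -> : [set t | [set 0] (t - c)] = [set c].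
    by apply/seteqP; split => t /= h; [have := h; move/eqP; rewrite subr_eq0 => /eqP | rewrite h subrr].
  exact: measurable_set1.
case: ifP => _.
  have -> : [set t | [set 1] (t - c)] = [set c + 1].
    by apply/seteqP; split => t /=; [move=> <-; ring | move=> ->; ring].
  exact: measurable_set1.
have -> : [set t | [set t | 0 < t < 1] (t - c)] = `]c, (c + 1)[%classic.
  apply/seteqP; split => t /=; rewrite in_itv /=; move=> /andP [h1 h2];
  apply/andP; split; lra.
exact: measurable_itv.
Qed.

Lemma Fs_meas s v : measurable (Fs s v).
Proof.
apply: (meas_coord (fun i => [set t | fc (s i) (t - (v i)%:~R)])) => i.
exact: fc_meas.
Qed.

Lemma cube_cover : unit_cube `<=`
  \big[setU/set0]_(s <- enum {ffun 'I_d -> 'I_3}) Fs s zv.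
Proof.
move=> x hx.
pose s : {ffun 'I_d -> 'I_3} := [ffun i => if tnth x i == 0 then (0 : 'I_3)
   else if tnth x i == 1 then (1 : 'I_3) else (2 : 'I_3)].
have hs : Fs s zv x.
  move=> i; rewrite /s ffunE /zv subr0 /fc.
  have := hx i => /andP [h0 h1].
  case: (eqVneq (tnth x i) 0) => [->|n0] //=.
  case: (eqVneq (tnth x i) 1) => [->|n1] //=.
  by apply/andP; split; [rewrite lt_neqAle eq_sym n0 | rewrite lt_neqAle n1].
have : s \in enum {ffun 'I_d -> 'I_3} by rewrite mem_enum.
elim: (enum _) => [//|a l IH].
rewrite in_cons => /orP [/eqP <-|hl]; rewrite big_cons /=.
  by left.
by right; apply: IH.
Qed.

Lemma exists_face (mu : {measure set (d.-tuple R) -> \bar R}) :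
  spt mu `<=` unit_cube -> mu setT != 0%E ->
  exists s, (0 < mu (Fs s zv))%E.
Proof.
move=> hspt hT; apply: contrapT => hno.
have h0 s : mu (Fs s zv) = 0.
  apply/eqP; rewrite -measure_le0 leNgt; apply/negP => h; apply: hno; by exists s.
have hc : mu.-negligible unit_cube.
  apply: (negligibleS cube_cover).
  apply: big_ind => //; first exact: negligible_set0.
    by move=> A1 A2; apply: negligibleU.
  move=> s _; apply/negligibleP; [exact: Fs_meas | exact: h0].
have hT0 : mu.-negligible setT.
  have -> : [set: d.-tuple R] = unit_cube `|` ~` unit_cube by rewrite setUv.
  by apply: negligibleU => //; exact: outside_negl.
by move/negP: hT; apply; rewrite (measure_negligible _ hT0).
Qed.

Definition Eset (m bs : d.-tuple nat) (s : {ffun 'I_d -> 'I_3}) : set (d.-tuple R) :=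
  [set x | forall i, fc (s i) ((tnth m i)%:R * tnth x i - (tnth bs i)%:R)].

Lemma fc_meas2 k (a c : R) : 0 < a -> measurable [set t | fc k (a * t - c)].
Proof.
move=> a0; have an : a != 0 by rewrite gt_eqF.
rewrite /fc; case: ifP => _.
  have -> : [set t | [set 0] (a * t - c)] = [set c / a].
    apply/seteqP; split => t /= h.
      have -> : t = (a * t - c + c) / a by field.
      by rewrite h add0r.
    by rewrite h; field.
  exact: measurable_set1.
case: ifP => _.
  have -> : [set t | [set 1] (a * t - c)] = [set (c + 1) / a].
    apply/seteqP; split => t /= h.
      have -> : t = (a * t - c + c) / a by field.
      by rewrite h addrC.
    by rewrite h; field.
  exact: measurable_set1.
have -> : [set t | [set t | 0 < t < 1] (a * t - c)] = `](c / a), ((c + 1) / a)[%classic.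
  apply/seteqP; split => t /=; rewrite in_itv /= ?ltr_pdivrMr ?ltr_pdivlMr //;
  move=> /andP [h1 h2]; apply/andP; split; nra.
exact: measurable_itv.
Qed.

Lemma Eset_meas m bs s : (forall i, (0 < tnth m i)%N) -> measurable (Eset m bs s).
Proof.
move=> hm.
apply: (meas_coord (fun i => [set t | fc (s i) ((tnth m i)%:R * t - (tnth bs i)%:R)])) => i.
by apply: fc_meas2; rewrite ltr0n.
Qed.

Lemma natz_R (k : nat) : ((k%:Z)%:~R : R) = k%:R. Proof. by []. Qed.

Lemma img_tr m bs s b n : (forall i, (0 < tnth m i)%N) ->
  [set vsub x (natvec b) | x in diagmul m @` translate (Eset m bs s) (intvec n)] =
  Fs s (fun i => (tnth bs i)%:Z - (tnth b i)%:Z + (tnth m i)%:Z * tnth n i).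
Proof.
move=> hm; apply/seteqP; split.
  move=> _ [_ [_ [x hx <-] <-] <-] i.
  rewrite /vsub /diagmul /vadd /natvec /intvec !tnth_mktuple.
  rewrite !intrD !intrN !intrM !natz_R.
  have -> : (tnth m i)%:R * (tnth x i + (tnth n i)%:~R) - (tnth b i)%:R -
     ((tnth bs i)%:R - (tnth b i)%:R + (tnth m i)%:R * (tnth n i)%:~R) =
     (tnth m i)%:R * tnth x i - (tnth bs i)%:R :> R by ring.
  exact: hx.
move=> z hz.
have mn0 i : ((tnth m i)%:R : R) != 0 by rewrite pnatr_eq0 -lt0n.
pose x := [tuple (tnth z i + (tnth b i)%:R) / (tnth m i)%:R - (tnth n i)%:~R | i < d].
exists (diagmul m (vadd x (intvec n))); last first.
  apply: eq_from_tnth => i; rewrite /vsub /diagmul /vadd /natvec /intvec /x !tnth_mktuple.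
  by field.
exists (vadd x (intvec n)) => //; exists x => //.
move=> i; have := hz i; rewrite /x tnth_mktuple !intrD !intrN !intrM !natz_R.
congr fc; by field.
Qed.

Lemma img0 m bs s b : (forall i, (0 < tnth m i)%N) ->
  [set vsub x (natvec b) | x in diagmul m @` (Eset m bs s)] =
  Fs s (fun i => (tnth bs i)%:Z - (tnth b i)%:Z).
Proof.
move=> hm; apply/seteqP; split.
  move=> _ [_ [x hx <-] <-] i.
  rewrite /vsub /diagmul /natvec !tnth_mktuple.
  rewrite !intrD !intrN !natz_R.
  have -> : (tnth m i)%:R * tnth x i - (tnth b i)%:R -
     ((tnth bs i)%:R - (tnth b i)%:R) =
     (tnth m i)%:R * tnth x i - (tnth bs i)%:R :> R by ring.
  exact: hx.
move=> z hz.
have mn0 i : ((tnth m i)%:R : R) != 0 by rewrite pnatr_eq0 -lt0n.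
pose x := [tuple (tnth z i + (tnth b i)%:R) / (tnth m i)%:R | i < d].
exists (diagmul m x); last first.
  apply: eq_from_tnth => i; rewrite /vsub /diagmul /natvec /x !tnth_mktuple.
  by field.
exists x => //.
move=> i; have := hz i; rewrite /x tnth_mktuple !intrD !intrN !natz_R.
congr fc; by field.
Qed.

Definition sv (k : 'I_3) : int := if val k == 0%N then 0 else if val k == 1%N then 2 else 1.

Lemma z0R : ((0 : int)%:~R : R) = 0. Proof. by []. Qed.
Lemma z1R : ((1 : int)%:~R : R) = 1. Proof. by []. Qed.
Lemma zN1R : ((-1 : int)%:~R : R) = -1. Proof. by rewrite intrN. Qed.

Lemma int_range (c lo hi : int) : (lo%:~R : R) <= c%:~R -> (c%:~R : R) <= hi%:~R ->
  lo <= c <= hi.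
Proof. by rewrite !ler_int => -> ->. Qed.

Lemma int_range_lt (c lo hi : int) : (lo%:~R : R) < c%:~R -> (c%:~R : R) < hi%:~R ->
  lo < c < hi.
Proof. by rewrite !ltr_int => -> ->. Qed.

Lemma coord_shift (k : 'I_3) (c : int) (y : R) : 0 <= y <= 1 -> fc k (y - c%:~R) ->
  exists k' : 'I_3, sv k' = sv k + 2 * c /\ (forall t : R, fc k (t - c%:~R) <-> fc k' t).
Proof.
move=> /andP [y0 y1]; rewrite /fc /sv.
case: k => [[|[|[|k]]] hk] //=.
- move=> hy.
  have := @int_range c 0 1; rewrite z0R z1R => /(_ ltac:(lra) ltac:(lra)) /andP [c0 c1].
  have [->|->] : c = 0 \/ c = 1 by lia.
    exists (0 : 'I_3); split => //= t; rewrite z0R subr0 //.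
  exists (1 : 'I_3); split => //= t; rewrite z1R; split => [h|->]; first lra. by rewrite subrr.
- move=> hy.
  have := @int_range c (-1) 0; rewrite z0R zN1R => /(_ ltac:(lra) ltac:(lra)) /andP [c0 c1].
  have [->|->] : c = -1 \/ c = 0 by lia.
    exists (0 : 'I_3); split => //= t; rewrite zN1R; split => [h|->]; lra.
  exists (1 : 'I_3); split => //= t; rewrite z0R subr0 //.
- move=> /andP [h1 h2].
  have := @int_range_lt c (-1) 1; rewrite z1R zN1R => /(_ ltac:(lra) ltac:(lra)) /andP [c0 c1].
  have -> : c = 0 by lia.
  exists (2 : 'I_3); split => //= t; rewrite z0R subr0 //.
Qed.

Definition phiZ (b : nat) (s : int) (mm : nat) : int := (2 * b%:Z + s - mm%:Z)^+2.
Definition Phi (m b : d.-tuple nat) (s : {ffun 'I_d -> 'I_3}) : int :=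
  \sum_(i < d) phiZ (tnth b i) (sv (s i)) (tnth m i).

Lemma sv_bnd k : 0 <= sv k <= 2.
Proof. by rewrite /sv; case: ifP => _ //; case: ifP. Qed.

Lemma key (mu : {measure set (d.-tuple R) -> \bar R}) (m : d.-tuple nat)
  (B : seq (d.-tuple nat)) :
  (forall i, (2 <= tnth m i)%N) -> (forall i, (d.+1 <= tnth m i)%N) ->
  (forall b, b \in B -> forall i, (tnth b i < tnth m i)%N) ->
  spt mu `<=` unit_cube ->
  forall (bs b : d.-tuple nat) (ss : {ffun 'I_d -> 'I_3}) (n : d.-tuple int),
  bs \in B -> b \in B -> (0 < mu (Fs ss zv))%E ->
  (forall b', b' \in B -> forall s, (0 < mu (Fs s zv))%E -> Phi m bs ss <= Phi m b' s) ->
  (exists i, tnth n i != 0) ->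
  mu (Fs ss (fun i => (tnth bs i)%:Z - (tnth b i)%:Z + (tnth m i)%:Z * tnth n i)) = 0%E.
Proof.
move=> hm2 hmd hB hspt bs b ss n hbs hb hss hmin [i0 hi0].
set v := fun i => _.
apply/eqP; rewrite -measure_le0 leNgt; apply/negP => hpos.
have [z [hz hzc]] : exists z, Fs ss v z /\ unit_cube z.
  apply: contrapT => hno.
  have : mu.-negligible (Fs ss v).
    apply: (negligibleS (B := Fs ss v) (A := ~` unit_cube)); last exact: outside_negl.
    move=> z hz hc; apply: hno; by exists z.
  move/(measure_negligible (Fs_meas _ _)) => h0; by rewrite h0 ltxx in hpos.
have ex i : exists k', sv k' = sv (ss i) + 2 * v i /\
   (forall t, fc (ss i) (t - (v i)%:~R) <-> fc k' t).
  exact: coord_shift (hzc i) (hz i).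
have [f hf] := fin_all_exists ex.
pose s' := finfun f.
have hF : Fs ss v = Fs s' zv.
  apply/seteqP; split => t ht i; have [_ h] := hf i; have := ht i;
  rewrite /s' ffunE /zv z0R subr0 => h'; [exact: (h _).1 | exact: (h _).2].
have hpos' : (0 < mu (Fs s' zv))%E by rewrite -hF.
have m1 := hmin bs hbs s' hpos'.
have m2 := hmin b hb ss hss.
have hi (i : 'I_d) : phiZ (tnth bs i) (sv (s' i)) (tnth m i) + phiZ (tnth b i) (sv (ss i)) (tnth m i)
   + (if tnth n i == 0 then 0 else 8 * (tnth m i)%:Z) <= 2 * phiZ (tnth bs i) (sv (ss i)) (tnth m i) + 8.
  have [h1 _] := hf i.
  have e : sv (s' i) = sv (ss i) + 2 * ((tnth bs i)%:Z - (tnth b i)%:Z + (tnth m i)%:Z * tnth n i).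
    by rewrite /s' ffunE h1.
  have [_ H] := @arith _ _ _ _ _ _ (hm2 i) (hB _ hb i) (hB _ hbs i) (sv_bnd _) (sv_bnd _) e.
  exact: H.
have hsum : \sum_(i < d) (phiZ (tnth bs i) (sv (s' i)) (tnth m i) + phiZ (tnth b i) (sv (ss i)) (tnth m i)
   + (if tnth n i == 0 then 0 else 8 * (tnth m i)%:Z)) <= \sum_(i < d) (2 * phiZ (tnth bs i) (sv (ss i)) (tnth m i) + 8).
  by apply: ler_sum => i _; exact: hi.
rewrite !big_split /= sumr_const card_ord -mulr_sumr in hsum.
have hge : 8 * (tnth m i0)%:Z <= \sum_(i < d) (if tnth n i == 0 then 0 else 8 * (tnth m i)%:Z).
  rewrite (bigD1 i0) //= (negPf hi0) lerDl sumr_ge0 // => i _.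
  by case: ifP.
have := hmd i0; rewrite /Phi in m1 m2.
move: hsum hge m1 m2.
set P1 := \sum_(i < d) phiZ (tnth bs i) (sv (s' i)) (tnth m i).
set P2 := \sum_(i < d) phiZ (tnth b i) (sv (ss i)) (tnth m i).
set P0 := \sum_(i < d) phiZ (tnth bs i) (sv (ss i)) (tnth m i).
set S := \sum_(i < d) _.
lia.
Qed.
End S.

Theorem theorem4p1 (R : realType) (d : nat) (m : d.-tuple nat)
  (B : seq (d.-tuple nat)) (p : d.-tuple nat -> R)
  (mu : {measure set (d.-tuple R) -> \bar R}) :
  (* (R, B) in D_d, with m_i >= d + 1 *)
  (forall i, 2 <= tnth m i)%N ->
  (forall i, d.+1 <= tnth m i)%N ->
  B != [::] -> uniq B ->
  (forall b, b \in B -> forall i, tnth b i < tnth m i)%N ->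
  (* positive weights *)
  (forall b, b \in B -> 0 < p b) ->
  (* mu finite, nonzero Borel measure with support in [0,1]^d *)
  (mu setT < +oo)%E -> mu setT != 0%E ->
  spt mu `<=` unit_cube ->
  exists E : set (d.-tuple R), measurable E /\
    (0 < nu_of m B p mu E)%E /\
    (forall n : d.-tuple int, n != [tuple 0 | _ < d] ->
       nu_of m B p mu (translate E (intvec n)) = 0%E).
Proof.
move=> hm2 hmd hBne huniq hB hp hfin hT hspt.
have hm0 i : (0 < tnth m i)%N by have := hm2 i; lia.
have [s0 hs0] := exists_face _ hspt hT.
pose b0 : d.-tuple nat := [tuple 0%N | _ < d].
pose bB (j : 'I_(size B)) := nth b0 B j.
have szB : (0 < size B)%N by rewrite lt0n size_eq0.
pose P := fun c : 'I_(size B) * {ffun 'I_d -> 'I_3} => `[< (0 < mu (Fs c.2 zv))%E >].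
pose F := fun c : 'I_(size B) * {ffun 'I_d -> 'I_3} => absz (Phi m (bB c.1) c.2).
have P0 : P (Ordinal szB, s0) by apply/asboolP.
case: (arg_minnP F P0) => [[j ss] /asboolP /= hss hmin].
set bs := bB j.
have hbs : bs \in B by rewrite /bs /bB mem_nth.
have Phi_ge0 b s : 0 <= Phi m b s.
  by apply: sumr_ge0 => i _; rewrite /phiZ sqr_ge0.
have hmin' : forall b', b' \in B -> forall s, (0 < mu (Fs s zv))%E ->
    Phi m bs ss <= Phi m b' s.
  move=> b' hb' s hs.
  have hi : (index b' B < size B)%N by rewrite index_mem.
  have := hmin (Ordinal hi, s) (asboolT hs).
  rewrite /F /bB /= nth_index // -(gez0_abs (Phi_ge0 _ _)) -[X in _ <= X](gez0_abs (Phi_ge0 b' s)).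
  by rewrite lez_nat.
exists (Eset m bs ss); split; first exact: Eset_meas.
split.
  rewrite /nu_of /conv_discrete.
  under eq_bigr => b _ do rewrite (img0 _ _ _ _ hm0).
  rewrite (big_rem bs hbs) /=.
  have -> : Fs ss (fun i => (tnth bs i)%:Z - (tnth bs i)%:Z) = Fs ss zv.
    have e : (fun i => (tnth bs i)%:Z - (tnth bs i)%:Z) = zv by apply: funext => i; rewrite subrr.
    by rewrite e.
  rewrite addeC; apply: lte_paddl; last first.
    by apply: mule_gt0 => //; rewrite lte_fin; exact: hp.
  rewrite big_seq; apply: sume_ge0 => b hb; apply: mule_ge0 => //.
  rewrite lee_fin; apply: ltW; apply: hp; exact: (mem_rem hb).
move=> n hn.
have [i0 hi0] : exists i, tnth n i != 0.
  apply: contrapT => hno; move/negP: hn; apply; apply/eqP/eq_from_tnth => i.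
  rewrite tnth_mktuple; apply/eqP; apply: contrapT => h; apply: hno; exists i; exact/negP.
rewrite /nu_of /conv_discrete.
under eq_bigr => b _ do rewrite (img_tr _ _ _ _ _ hm0).
rewrite big_seq; apply: big1 => b hb.
by rewrite (@key _ _ mu m B hm2 hmd hB hspt _ _ _ _ hbs hb hss hmin' (ex_intro _ i0 hi0)) mule0.
Qed.
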